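(* Let $\mathcal{X}$ be a real Hilbert space, let $\mathbb{A},\mathbb{B},\mathbb{C}:\mathcal{X}\to 2^{\mathcal{X}}$ be maximal monotone operators with $\mathbb{C}$ $\beta$-cocoercive for some $\beta>0$ (so $\mathbb{C}$ is single-valued), let $\gamma>0$, and define $$T=\mathbb{J}_{\gamma\mathbb{C}}\circ\big(\mathbb{J}_{\gamma \mathbb{A}}\circ(2\mathbb{J}_{\gamma \mathbb{B}}-I-\gamma \mathbb{C}\mathbb{J}_{\gamma \mathbb{B}})+\gamma \mathbb{C}\mathbb{J}_{\gamma \mathbb{B}}\big)+ (I-\mathbb{J}_{\gamma \mathbb{B}}).$$ Then $$\operatorname{zer}(\mathbb{A}+\mathbb{B}+\mathbb{C})=\mathbb{J}_{\gamma\mathbb{B}}(\operatorname{Fix}T),$$ where $\operatorname{Fix}T=\{x+\gamma u\;:\;0\in(\mathbb{A}+\mathbb{B}+\mathbb{C})x,\ u\in(\mathbb{B}x)\cap(-\mathbb{A}x-\mathbb{C}x)\}$.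
   Context: For a monotone operator $M$, $\mathbb{J}_{M}=(I+M)^{-1}$ is its resolvent ($I$ the identity on $\mathcal{X}$). $\operatorname{zer}(M)=\{x: 0\in Mx\}$. $\operatorname{Fix}T=\{z: Tz=z\}$ is the fixed-point set of $T$. An operator $\mathbb{C}$ is $\beta$-cocoercive if $\langle u-v,x-y\rangle\ge\beta\|u-v\|^2$ for all $x,y$, $u\in\mathbb{C}x$, $v\in\mathbb{C}y$. *)

(* Defs.v *)
From HB Require Import structures.
From mathcomp Require Import all_boot all_order all_algebra.
From mathcomp Require Import all_classical all_reals all_analysis.
Set Implicit Arguments. Unset Strict Implicit. Unset Printing Implicit Defensive.
Import Order.TTheory GRing.Theory Num.Theory.
Import numFieldNormedType.Exports.
Local Open Scope classical_set_scope.
Local Open Scope ring_scope.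

(* A real Hilbert space is modelled as a complete normed space X over a
   realType R together with an inner product ip inducing the norm. *)
Definition inner_product (R : realType) (X : completeNormedModType R)
  (ip : X -> X -> R) : Prop :=
  [/\ (forall x y, ip x y = ip y x),
      (forall a x y z, ip (a *: x + y) z = a * ip x z + ip y z) &
      (forall x, ip x x = `|x| ^+ 2)].

Section Ops.
Context {R : realType} {X : completeNormedModType R}.

Definition op_id : X -> set X := fun x => [set x].
Definition op_add (M N : X -> set X) : X -> set X :=
  fun x => [set w | exists u v, M x u /\ N x v /\ w = u + v].
Definition op_scale (a : R) (M : X -> set X) : X -> set X :=
  fun x => [set w | exists u, M x u /\ w = a *: u].
Definition op_sub (M N : X -> set X) : X -> set X := op_add M (op_scale (-1) N).
Definition op_comp (M N : X -> set X) : X -> set X :=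
  fun x => [set w | exists y, N x y /\ M y w].
Definition op_inv (M : X -> set X) : X -> set X := fun y => [set x | M x y].
Definition resolvent (M : X -> set X) : X -> set X := op_inv (op_add op_id M).
Definition zer (M : X -> set X) : set X := [set x | M x 0].
Definition Fix (T : X -> set X) : set X := [set z | T z z].
Definition op_image (M : X -> set X) (S : set X) : set X :=
  [set x | exists z, S z /\ M z x].

Definition monotone (ip : X -> X -> R) (M : X -> set X) : Prop :=
  forall x y u v, M x u -> M y v -> 0 <= ip (u - v) (x - y).
Definition maximal_monotone (ip : X -> X -> R) (M : X -> set X) : Prop :=
  monotone ip M /\
  forall M' : X -> set X, monotone ip M' -> (forall x, M x `<=` M' x) ->
    forall x, M' x `<=` M x.
Definition cocoercive (ip : X -> X -> R) (beta : R) (M : X -> set X) : Prop :=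
  forall x y u v, M x u -> M y v -> beta * `|u - v| ^+ 2 <= ip (u - v) (x - y).
End Ops.

(* Main.v *)
Require Import Defs.
From HB Require Import structures.
From mathcomp Require Import all_boot all_order all_algebra.
From mathcomp Require Import all_classical all_reals all_analysis.
Import Order.TTheory GRing.Theory Num.Theory.
Import numFieldNormedType.Exports.
Local Open Scope classical_set_scope.
Local Open Scope ring_scope.
Set Implicit Arguments. Unset Strict Implicit.
Section S.
Variable (R : realFieldType) (V : lmodType R).
Lemma F1 (x z a : V) : z = a + (z + -1 *: x) -> a = x.
Proof. rewrite scaleN1r addrCA -{1}(addr0 z) => /addrI /eqP; rewrite eq_sym subr_eq0 => /eqP //. Qed.
Lemma F3 (g : R) (x bb c aa : V) : g != 0 ->
  2%:R *: x + -1 *: (x + g *: bb) + -1 *: (g *: c) = x + g *: aa -> aa + bb + c = 0.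
Proof.
move=> g0; rewrite !scaleN1r scaler_nat mulr2n opprD !addrA addrK -!addrA => /addrI H.
have : g *: (aa + bb + c) = 0 by rewrite !scalerDr -H addrAC addrNK addNr.
move/eqP; rewrite scaler_eq0 (negbTE g0) /=. by rewrite addrA => /eqP.
Qed.
Lemma G1 (x z : V) : z = x + (z + -1 *: x).
Proof. by rewrite scaleN1r addrCA addrN addr0. Qed.
Lemma G2 (g : R) (x a2 c2 : V) : x + g*:a2 = 2%:R *: x + -1 *: (x + g *: (-1*:a2 + -1*:c2)) + -1 *: (g *: c2).
Proof. rewrite !scaleN1r scaler_nat mulr2n opprD !addrA addrK scalerDr !scalerN opprD !opprK -addrA addrK //. Qed.
Lemma G3 (a b c : V) : 0 = a + b + c -> b = -1*:a + -1*:c.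
Proof. by rewrite !scaleN1r => /esym/eqP; rewrite -addrA addrCA addr_eq0 opprD => /eqP. Qed.
Lemma U1 (g : R) (x x' u u' : V) : x + g*:u = x' + g*:u' -> x - x' = g*:(u' - u).
Proof. by move=> E; apply/eqP; rewrite scalerBr subr_eq addrC addrA -E addrK. Qed.
End S.

Section IP.
Variables (R : realType) (X : completeNormedModType R) (ip : X -> X -> R).
Hypothesis Hip : inner_product ip.

Lemma ip0l z : ip 0 z = 0.
Proof.
case: Hip => _ H2 _; have := H2 1 0 0 z; rewrite scaler0 addr0 mul1r => h.
by apply: (addrI (ip 0 z)); rewrite addr0 -h.
Qed.
Lemma ipZl a x z : ip (a *: x) z = a * ip x z.
Proof. case: Hip => _ H2 _; by have := H2 a x 0 z; rewrite !addr0 ip0l addr0. Qed.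
Lemma ipZr a x z : ip x (a *: z) = a * ip x z.
Proof. case: Hip => H1 _ _; by rewrite H1 ipZl H1. Qed.
Lemma ip0r z : ip z 0 = 0.
Proof. case: Hip => H1 _ _; by rewrite H1 ip0l. Qed.

Lemma mono_uniq (M : X -> set X) (g : R) x x' u u' :
  Defs.monotone ip M -> 0 < g -> x + g *: u = x' + g *: u' -> M x u -> M x' u' ->
  u = u' /\ x = x'.
Proof.
move=> mo g0 E Mu Mu'.
have m := mo x x' u u' Mu Mu'.
rewrite (U1 E) ipZr -(opprB u u') -(scaleN1r (u - u')) ipZr mulN1r pmulr_rge0 // oppr_ge0 in m.
case: Hip => _ _ H3; rewrite H3 in m.
have n0 : `|u - u'| ^+ 2 = 0 by apply/le_anti; rewrite m exprn_ge0.
move/eqP: n0; rewrite sqrf_eq0 normr_eq0 subr_eq0 => /eqP uu.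
by split => //; move: E; rewrite uu => /addIr.
Qed.

Lemma coco_uniq (C : X -> set X) beta x c c' :
  0 < beta -> cocoercive ip beta C -> C x c -> C x c' -> c = c'.
Proof.
move=> b0 co Hc Hc'; have := co x x c c' Hc Hc'.
rewrite subrr ip0r pmulr_rle0 // => m.
have n0 : `|c - c'| ^+ 2 = 0 by apply/le_anti; rewrite m exprn_ge0.
by move/eqP: n0; rewrite sqrf_eq0 normr_eq0 subr_eq0 => /eqP.
Qed.

Lemma res_iff (M : X -> set X) g z x :
  resolvent (op_scale g M) z x <-> exists b, M x b /\ z = x + g *: b.
Proof.
split.
- by case=> i [v [-> [[b [Mb ->]] ->]]]; exists b.
- by case=> b [Mb ->]; exists x, (g *: b); split => //; split => //; exists b.
Qed.
End IP.

Theorem lemma2 (R : realType) (X : completeNormedModType R) (ip : X -> X -> R)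
  (Hip : inner_product ip) (A B C : X -> set X) (beta gamma : R)
  (hA : maximal_monotone ip A) (hB : maximal_monotone ip B)
  (hC : maximal_monotone ip C) (hbeta : 0 < beta) (hCc : cocoercive ip beta C)
  (hgamma : 0 < gamma) :
  let JA := resolvent (op_scale gamma A) in
  let JB := resolvent (op_scale gamma B) in
  let JC := resolvent (op_scale gamma C) in
  let gCJB := op_scale gamma (op_comp C JB) in
  let T := op_add
             (op_comp JC (op_add
                (op_comp JA (op_sub (op_sub (op_scale 2 JB) op_id) gCJB))
                gCJB))
             (op_sub op_id JB) in
  zer (op_add (op_add A B) C) = op_image JB (Fix T) /\
  Fix T = [set z | exists x u, z = x + gamma *: u /\
                     zer (op_add (op_add A B) C) x /\
                     B x u /\ op_sub (op_scale (-1) A) C x u].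
Proof.
move=> JA JB JC gCJB T.
have hJA z x : JA z x <-> exists b, A x b /\ z = x + gamma *: b by apply: res_iff.
have hJB z x : JB z x <-> exists b, B x b /\ z = x + gamma *: b by apply: res_iff.
have hJC z x : JC z x <-> exists b, C x b /\ z = x + gamma *: b by apply: res_iff.
have g0 : gamma != 0 by rewrite gt_eqF.
have FixE : Fix T = [set z | exists x u, z = x + gamma *: u /\
                     zer (op_add (op_add A B) C) x /\
                     B x u /\ op_sub (op_scale (-1) A) C x u].
  apply/seteqP; split => z.
  - move=> [a [b [[y0 [[p [q [[s [Hs HJA]] [Hq e1]]]] HJC]] [[b1 [b2 [e2 [[x5 [HJB5 e3]] e4]]]] Ez]]]].
    move: Hq => [c3 [[x3 [HJB3 HC3]] e5]].
    move: Hs => [s1 [s2 [[t1 [t2 [[x1 [HJB1 e6]] [[i [e7 e8]] e9]]]] [[q' [[c2 [[x2 [HJB2 HC2]] e10]] e11]] e12]]]].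
    subst b2 b q y0 s s1 s2 t1 t2 q'.
    have e2' : b1 = z := e2. have e7' : i = z := e7. subst b1 i.
    have ax := F1 Ez. subst a.
    case/hJB: HJB5 => bb [Bbb Ez5].
    have ux y : JB z y -> y = x5.
      move=> /hJB [b' [Bb' Ey]].
      exact: (mono_uniq Hip (proj1 hB) hgamma (etrans (esym Ey) Ez5) Bb' Bbb).2.
    move: (ux _ HJB1) (ux _ HJB2) (ux _ HJB3) => e_1 e_2 e_3; subst x1 x2 x3.
    have ec := coco_uniq Hip hbeta hCc HC2 HC3; subst c3.
    case/hJC: HJC => c4 [Cc4 Ep].
    have ec := coco_uniq Hip hbeta hCc HC2 Cc4; subst c4.
    move/addIr: Ep => Ep; subst p.
    case/hJA: HJA => aa [Aaa Es].
    rewrite Ez5 in Es; have H := F3 g0 Es.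
    exists x5, bb; split => //; split; last split => //.
    + exists (aa + bb), c2; split; first by exists aa, bb.
      by split => //; rewrite H.
    + exists (-1 *: aa), (-1 *: c2); split; first by exists aa.
      split; first by exists c2.
      exact: G3 (esym H).
  - move=> [x [u [-> [_ [Bu [m [n [[a2 [Aa2 ->]] [[c2 [Cc2 ->]] eu]]]]]]]]].
    clear z; set z := x + gamma *: u.
    have Jz : JB z x by apply/hJB; exists u.
    exists x, (z + -1 *: x); split; last first.
      split; last by apply: G1.
      by exists z, (-1 *: x); split => //; split => //; exists x.
    exists (x + gamma *: c2); split; last by apply/hJC; exists c2.
    exists x, (gamma *: c2); split; last first.
      by split => //; exists c2; split => //; exists x.
    exists (x + gamma *: a2); split; last by apply/hJA; exists a2.
    exists (2 *: x + -1 *: z), (-1 *: (gamma *: c2)); split.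
      by exists (2 *: x), (-1 *: z); split; [exists x | split => //; exists z].
    split; first by exists (gamma *: c2); split => //; exists c2; split => //; exists x.
    by rewrite /z eu; apply: G2.
split; last exact: FixE.
apply/seteqP; split => x.
- move=> Hz; case: (Hz) => [w1 [w2 [[a1 [b1 [Aa1 [Bb1 ew1]]]] [Cw2 e0]]]].
  exists (x + gamma *: b1); split; last by apply/hJB; exists b1.
  rewrite FixE; exists x, b1; split => //; split => //; split => //.
  exists (-1 *: a1), (-1 *: w2); split; first by exists a1.
  split; first by exists w2.
  by apply: G3; rewrite e0 ew1.
- move=> [z [Fz Jz]]; rewrite FixE in Fz; case: Fz => [x' [u [Ez [Zx [Bu _]]]]].
  case/hJB: Jz => [b [Bb Ez']].
  have [_ ->] := mono_uniq Hip (proj1 hB) hgamma (etrans (esym Ez') Ez) Bb Bu.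
  exact: Zx.
Qed.
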